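(* Let the qubit HQMM be defined as follows. For each time $m\ge 0$, the hidden spaces are $\mathcal{H}_m\simeq\mathbb{C}^2$ with computational basis $\{|0\rangle_m,|1\rangle_m\}$ and the output space is $\mathcal{K}_m\simeq\mathbb{C}^2$ with orthonormal basis $\{|e_0\rangle_m,|e_1\rangle_m\}$. Let $U=\exp(-\mathrm{i}\tfrac{\theta}{2}\sigma_x)=\cos(\tfrac{\theta}{2})\mathbb{I}-\mathrm{i}\sin(\tfrac{\theta}{2})\sigma_x$ with $0<|\theta|<\pi$. The hidden transition expectation is $\mathcal{E}_{H;m}(X)=V_{H;m}^{*}XV_{H;m}$ for $X\in\mathcal{B}(\mathcal{H}_m\otimes\mathcal{H}_{m+1})$, with isometry $V_{H;m}|\psi\rangle_m=U|\psi\rangle_m\otimes|0\rangle_{m+1}$; the emission expectation is $\mathcal{E}_{H,O;m}(Y)=V_{H,O;m}^{*}YV_{H,O;m}$ for $Y\in\mathcal{B}(\mathcal{H}_m\otimes\mathcal{K}_m)$, with isometry $V_{H,O;m}|0\rangle_m=|0\rangle_m\otimes|e_0\rangle_m$, $V_{H,O;m}|1\rangle_m=|1\rangle_m\otimes|e_1\rangle_m$. The conventional block maps are $\mathcal{F}^{(m)}_{a_m,b_m}(X)=\mathcal{E}_{H;m}\bigl(\mathcal{E}_{H,O;m}(a_m\otimes b_m)\otimes X\bigr)$ and the causal block maps are $\mathcal{G}^{(m)}_{a_m,b_m}(X)=\mathcal{E}_{H,O;m}\bigl(\mathcal{E}_{H;m}(a_m\otimes X)\otimes b_m\bigr)$,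 for $a_m\in\mathcal{B}(\mathcal{H}_m)$, $b_m\in\mathcal{B}(\mathcal{K}_m)$, $X\in\mathcal{B}(\mathcal{H}_{m+1})$. Let the initial hidden state be $\phi_{H,0}(X)=\operatorname{Tr}(\rho_{H;0}X)$ with $\rho_{H;0}=|0\rangle_0\langle 0|$, and define the conventional and causal HQMM cylinder states by $\varphi_{H,O}\bigl(\bigotimes_{m=0}^n(a_m\otimes b_m)\bigr)=\phi_{H,0}\circ\mathcal{F}^{(0)}_{a_0,b_0}\circ\cdots\circ\mathcal{F}^{(n)}_{a_n,b_n}(\mathbb{I}_{H;n+1})$ and $\psi_{H,O}\bigl(\bigotimes_{m=0}^n(a_m\otimes b_m)\bigr)=\phi_{H,0}\circ\mathcal{G}^{(0)}_{a_0,b_0}\circ\cdots\circ\mathcal{G}^{(n)}_{a_n,b_n}(\mathbb{I}_{H;n+1})$. For the effect sequence \[ (a_0,b_0)=(\mathbb{I}_{\mathcal{H}_0},|e_0\rangle_0\langle e_0|), \qquad (a_m,b_m)=(\mathbb{I}_{\mathcal{H}_m},\mathbb{I}_{\mathcal{K}_m})\;\text{for all }m\ge 1, \] the conventional and causal HQMM cylinder states $\varphi_{H,O}$ and $\psi_{H,O}$ are different. In particular, there exists $n\ge 0$ and an event in the cylinder effect algebra for which the two probability assignments do not coincide.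
   Context: Hidden quantum Markov models (HQMMs) built from completely positive unital transition expectations $\mathcal{E}_{H;m}:\mathcal{B}(\mathcal{H}_m)\otimes\mathcal{B}(\mathcal{H}_{m+1})\to\mathcal{B}(\mathcal{H}_m)$ and emission expectations $\mathcal{E}_{H,O;m}:\mathcal{B}(\mathcal{H}_m)\otimes\mathcal{B}(\mathcal{K}_m)\to\mathcal{B}(\mathcal{H}_m)$, composed either in the conventional (emission–then–transition) order or the causal (transition–then–emission) order; the finite-time functionals extend to states on the quasi-local algebra $\bigotimes_{m\in\mathbb{N}}\mathcal{B}(\mathcal{H}_m)\otimes\mathcal{B}(\mathcal{K}_m)$. *)

(* Defs.v *)
From HB Require Import structures.
From mathcomp Require Import all_boot all_order all_algebra.
From mathcomp Require Import reals trigo.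
From mathcomp Require Import complex mxtens.
Set Implicit Arguments. Unset Strict Implicit. Unset Printing Implicit Defensive.
Import Order.TTheory GRing.Theory Num.Theory.
Local Open Scope ring_scope.
Local Open Scope complex_scope.

Section QubitHQMM.
Variable R : realType.
Local Notation C := (complex R).
Local Notation M2 := 'M[C]_2.

Definition adjmx (m n : nat) (A : 'M[C]_(m, n)) : 'M[C]_(n, m) :=
  map_mx Num.conj A^T.

Definition sigma_x : M2 := \matrix_(i, j) (if i == j then 0 else 1).

(* U = exp(-i theta/2 sigma_x) = cos(theta/2) I - i sin(theta/2) sigma_x *)
Definition Uth (theta : R) : M2 :=
  (cos (theta / 2))%:C *: 1%:M - ('i * (sin (theta / 2))%:C) *: sigma_x.

Definition ket0 : 'M[C]_(2, 1) := delta_mx 0 0.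

Definition V_H (theta : R) : 'M[C]_(2 * 2, 2) := Uth theta *t ket0.

(* V_{H,O;m} |i> = |i> (x) |e_i>,  i = 0, 1 *)
Definition V_HO : 'M[C]_(2 * 2, 2) :=
  \matrix_(k, l) (if k == mxtens_index (l, l) then 1 else 0).

Definition E_H (theta : R) (X : 'M[C]_(2 * 2)) : M2 :=
  adjmx (V_H theta) *m X *m V_H theta.

Definition E_HO (Y : 'M[C]_(2 * 2)) : M2 := adjmx V_HO *m Y *m V_HO.

Definition Fblock (theta : R) (a b X : M2) : M2 :=
  E_H theta (E_HO (a *t b) *t X).

Definition Gblock (theta : R) (a b X : M2) : M2 :=
  E_HO (E_H theta (a *t X) *t b).

Fixpoint compose_blocks (blk : M2 -> M2 -> M2 -> M2) (a b : nat -> M2)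
    (m k : nat) : M2 :=
  match k with
  | 0 => blk (a m) (b m) 1%:M
  | k'.+1 => blk (a m) (b m) (compose_blocks blk a b m.+1 k')
  end.

Definition rho_H0 : M2 := delta_mx 0 0.
Definition phi_H0 (X : M2) : C := \tr (rho_H0 *m X).

Definition varphi_HO (theta : R) (a b : nat -> M2) (n : nat) : C :=
  phi_H0 (compose_blocks (Fblock theta) a b 0 n).

Definition psi_HO (theta : R) (a b : nat -> M2) (n : nat) : C :=
  phi_H0 (compose_blocks (Gblock theta) a b 0 n).

Definition eff_a (m : nat) : M2 := 1%:M.
Definition eff_b (m : nat) : M2 := if m == 0%N then delta_mx 0 0 else 1%:M.

End QubitHQMM.

(* Main.v *)
Require Import Defs.
From HB Require Import structures.
From mathcomp Require Import all_boot all_order all_algebra.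
From mathcomp Require Import reals trigo.
From mathcomp Require Import complex mxtens.
From mathcomp Require Import lra.
Import Order.TTheory GRing.Theory Num.Theory.
Local Open Scope ring_scope.

Lemma sum4 (T : nmodType) (F : 'I_(2*2) -> T) :
  \sum_(k < 2*2) F k = \sum_(i < 2) \sum_(j < 2) F (mxtens_index (i, j)).
Proof.
rewrite pair_big /=; apply: reindex => /=.
by exists (@mxtens_unindex 2 2) => k _; rewrite (mxtens_indexK, mxtens_unindexK) //; case: k.
Qed.

Lemma idx_eq (a b c d : 'I_2) :
  (mxtens_index (a, b) == mxtens_index (c, d)) = (a == c) && (b == d).
Proof. by rewrite (inj_eq (can_inj (@mxtens_indexK 2 2))). Qed.

Section S.
Variable R : realType.
Local Notation C := (complex R).

Lemma phiE (X : 'M[C]_2) : phi_H0 X = X 0 0.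
Proof.
rewrite /phi_H0 /rho_H0 /mxtrace !big_ord_recl big_ord0 /= !mxE !big_ord_recl big_ord0 /= !mxE /=.
by rewrite big_ord0 mul1r !mul0r !add0r !addr0.
Qed.

Lemma E_HO_entry (Y : 'M[C]_(2*2)) i j :
  E_HO Y i j = Y (mxtens_index (i, i)) (mxtens_index (j, j)).
Proof.
rewrite /E_HO /adjmx /V_HO mxE (bigD1 (mxtens_index (j, j))) //= big1 => [|l /negbTE Hl]; last first.
  by rewrite [X in _ * X]mxE Hl mulr0.
rewrite [X in _ * X]mxE eqxx mulr1 addr0 mxE (bigD1 (mxtens_index (i, i))) //= big1 => [|l /negbTE Hl]; last first.
  by rewrite !mxE Hl conjC0 mul0r.
by rewrite !mxE eqxx conjC1 mul1r addr0.
Qed.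

Lemma adjE m n (A : 'M[C]_(m, n)) i k : adjmx A i k = (A k i)^*.
Proof. by rewrite /adjmx !mxE. Qed.

Lemma V_entry (W : 'M[C]_2) (c d j : 'I_2) :
  (W *t (@ket0 R)) (mxtens_index (c, d)) j = W c j * (d == 0)%:R.
Proof.
rewrite /tensmx mxE mxtens_indexK /= /ket0 mxE.
have -> : Ordinal (mxtens_index_proof1 (m:=2) (n:=1) j) = j by apply: val_inj => /=; rewrite divn1.
by rewrite (ord1 (Ordinal _)) eqxx andbT.
Qed.

Lemma EW_entry (W : 'M[C]_2) (Y : 'M[C]_(2*2)) i j :
  (adjmx (W *t (@ket0 R)) *m Y *m (W *t (@ket0 R)) : 'M_2) i j = \sum_(a < 2) \sum_(c < 2)
     (W a i)^* * Y (mxtens_index (a, 0)) (mxtens_index (c, 0)) * W c j.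
Proof.
rewrite mxE sum4.
under eq_bigr => c _ do rewrite big_ord_recl big_ord1 !V_entry /= !mulr0 addr0 mulr1.
rewrite exchange_big; apply: eq_bigr => c _; rewrite mxE sum4 big_distrl /=.
apply: eq_bigr => a _; rewrite big_ord_recl big_ord1 !adjE !V_entry /=.
by rewrite mulr1 mulr0 conjC0 mul0r addr0.
Qed.

Lemma main_eq (theta : R) :
  varphi_HO theta (@eff_a R) (@eff_b R) 0 =
    (Uth theta 0 0)^* * Uth theta 0 0 /\
  psi_HO theta (@eff_a R) (@eff_b R) 0 =
    (Uth theta 0 0)^* * Uth theta 0 0 + (Uth theta 1 0)^* * Uth theta 1 0.
Proof.
rewrite /varphi_HO /psi_HO /= /Fblock /Gblock /eff_a /eff_b /= !phiE.
rewrite E_HO_entry tensmxE /E_H /V_H !EW_entry.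
rewrite !big_ord_recl !big_ord0 !tensmxE !E_HO_entry !tensmxE.
move: (Uth theta) => U.
rewrite !mxE /=.
rewrite ?mulr1 ?mul0r ?mulr0 ?mul0r ?add0r ?addr0 ?mulr1 ?mul1r ?mulr0 ?mul0r ?addr0 ?add0r. split => //.
have -> : lift ord0 ord0 = 1 :> 'I_2 by apply: val_inj.
by [].
Qed.

Lemma sin_half_neq0 (theta : R) : 0 < `|theta| < pi -> sin (theta / 2) != 0.
Proof.
case/andP => h0 hpi.
case: (ltrgtP theta 0) => hth.
- rewrite ltr0_norm // in hpi.
  have : 0 < sin (- theta / 2) by apply: sin_gt0_pi; apply/andP; split; lra.
  rewrite mulNr sinN; lra.
- rewrite gtr0_norm // in hpi.
  have : 0 < sin (theta / 2) by apply: sin_gt0_pi; apply/andP; split; lra.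
  lra.
- by rewrite hth normr0 ltxx in h0.
Qed.

Lemma U10_neq0 (theta : R) : 0 < `|theta| < pi -> Uth theta 1 0 != 0.
Proof.
move=> /sin_half_neq0 hs; rewrite /Uth !mxE /= mulr0 sub0r mulr1 oppr_eq0 mulf_eq0 negb_or.
apply/andP; split; first by rewrite eq_complex /= oner_eq0 andbF.
by rewrite fmorph_eq0.
Qed.

Lemma final (theta : R) : 0 < `|theta| < pi ->
  varphi_HO theta (@eff_a R) (@eff_b R) 0 <> psi_HO theta (@eff_a R) (@eff_b R) 0.
Proof.
move=> /U10_neq0 hU.
have [-> ->] := main_eq theta => E.
have : (Uth theta 1 0)^* * Uth theta 1 0 = 0.
  by apply: (addrI ((Uth theta 0 0)^* * Uth theta 0 0)); rewrite addr0 -E.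
move/eqP; rewrite mulf_eq0 conjC_eq0 orbb.
by apply/negP.
Qed.

End S.

Theorem mainTheorem1 (R : realType) (theta : R) :
  0 < `|theta| < pi ->
  exists n : nat,
    varphi_HO theta (@eff_a R) (@eff_b R) n <> psi_HO theta (@eff_a R) (@eff_b R) n.
Proof.
by move=> h; exists 0%N; apply: final.
Qed.
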